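(* Let $b>0$, $m\in(0,1]$, let $h:J\to[0,\infty)$ with $(0,1)\subseteq J\subseteq\mathbb{R}$, $h\not\equiv0$, and $h^2$ Lebesgue integrable on $(0,1)$. Let $\varphi:[0,b]\to[0,b]$ and let $f:[0,b]\to\mathbb{R}$ be a Lebesgue measurable $\varphi_{h,m}$-convex function. Then for all $x,y\in[0,b]$ with $\varphi(x)\ne m\varphi(y)$, $$\frac{1}{m\varphi(y)-\varphi(x)}\int_{\varphi(x)}^{m\varphi(y)}f(u)\,f\big(\varphi(x)+m\varphi(y)-u\big)\,du\le\big[f^2(\varphi(x))+m^2f^2(\varphi(y))\big]\int_0^1h(t)h(1-t)\,dt+(m+1)\,f(\varphi(x))f(\varphi(y))\int_0^1h^2(t)\,dt.$$
   Context: Definition ($\varphi_{h,m}$-convexity). Let $b>0$, $m\in(0,1]$, $h:J\to[0,\infty)$ with $(0,1)\subseteq J$, $h\not\equiv 0$, and $\varphi:[0,b]\to[0,b]$. A function $f:[0,b]\to\mathbb{R}$ is called $\varphi_{h,m}$-convex if $f\ge 0$ and $f(t\varphi(x)+m(1-t)\varphi(y))\le h(t)f(\varphi(x))+m\,h(1-t)f(\varphi(y))$ for all $x,y\in[0,b]$, $t\in(0,1)$. Integrals over an interval with endpoints in reversed order are oriented, so the left-hand side is the average of a non-negative function over the interval between $\varphi(x)$ and $m\varphi(y)$ (a value in $[0,\infty]$). *)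

(* Defs.v *)
From HB Require Import structures.
From mathcomp Require Import all_boot all_order all_algebra.
From mathcomp Require Import all_classical all_reals all_analysis.
Set Implicit Arguments. Unset Strict Implicit. Unset Printing Implicit Defensive.
Import Order.TTheory GRing.Theory Num.Theory.
Local Open Scope ring_scope.
Local Open Scope classical_set_scope.

(* phi_{h,m}-convexity of f on [0,b] (functions are total on R; only their
   values on the relevant domains matter). *)
Definition phi_hm_convex (R : realType) (b m : R) (h phi f : R -> R) : Prop :=
  (forall x, 0 <= x <= b -> 0 <= f x) /\
  (forall x y t, 0 <= x <= b -> 0 <= y <= b -> 0 < t < 1 ->
     f (t * phi x + m * (1 - t) * phi y)
       <= h t * f (phi x) + m * h (1 - t) * f (phi y)).

(* Main.v *)
Require Import Defs.
From HB Require Import structures.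
From mathcomp Require Import all_boot all_order all_algebra.
From mathcomp Require Import all_classical all_reals all_analysis.
From mathcomp Require Import measurable_realfun.
From mathcomp Require Import ring lra.
Import Order.TTheory GRing.Theory Num.Theory.
Set Implicit Arguments. Unset Strict Implicit. Unset Printing Implicit Defensive.
Local Open Scope ring_scope.
Local Open Scope classical_set_scope.
Local Open Scope ereal_scope.

Local Notation mu := (@lebesgue_measure _).

Definition aff (R : realType) (p c : R) : measurableTypeR R -> measurableTypeR R :=
  fun t => (p + t * c)%R.
Lemma measurable_aff (R : realType) (p c : R) D : measurable_fun D (aff p c).
Proof. by apply: measurable_funD => //; apply: measurable_funM. Qed.
#[local] Hint Extern 0 (measurable_fun _ (aff _ _)) => solve [apply: measurable_aff] : core.

Lemma affine_push (R : realType) (p c : R) :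
  (c != 0)%R ->
  forall A, measurable A -> mu A = (`|c|%:E * mu (aff p c @^-1` A))%E.
Proof.
move=> c0.
have := @lebesgue_measure_unique R (mscale (`|c|%:nng : {nonneg R})%R (pushforward mu (aff p c))).
Unshelve. all: try exact: measurable_aff.
move=> H A mA; rewrite (H _ (@measurable_aff _ p c setT)) //; last first.
move=> _ [[x1 x2] _ <-] /=; rewrite /mscale /pushforward /=.
unfold pushforward.
have [cpos|cneg] := ltP 0%R c.
  have -> : aff p c @^-1` `]x1, x2] = `](((x1 - p) / c)%R), (((x2 - p) / c)%R)]%classic.
    apply/seteqP; split => t /=; rewrite !in_itv /= /aff => /andP[h1 h2]; apply/andP; split.
    1-4: rewrite ?(ler_pdivrMr, ler_pdivlMr, ltr_pdivrMr, ltr_pdivlMr) // in h1 h2 *; lra.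
  rewrite !lebesgue_measure_itv /= !lte_fin.
  rewrite ltr_pM2r ?invr_gt0 // ltrD2r; case: ifP => _; rewrite ?mule0 //.
  rewrite -!EFinD -EFinM; congr EFin; rewrite gtr0_norm //; field; exact: lt0r_neq0.
have cneg' : (c < 0)%R by rewrite lt_neqAle c0 cneg.
have -> : aff p c @^-1` `]x1, x2] = `[(((x2 - p) / c)%R), (((x1 - p) / c)%R)[%classic.
  apply/seteqP; split => t /=; rewrite !in_itv /= /aff => /andP[h1 h2]; apply/andP; split.
  1-4: rewrite ?(ler_ndivrMr, ler_ndivlMr, ltr_ndivrMr, ltr_ndivlMr) // in h1 h2 *; lra.
rewrite !lebesgue_measure_itv /= !lte_fin.
rewrite ltr_nM2r ?invr_lt0 // ltrD2r; case: ifP => _; rewrite ?mule0 //.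
rewrite -!EFinD -EFinM; congr EFin; rewrite ltr0_norm //; field; exact: ltr0_neq0.
Qed.

Lemma affine_integral (R : realType) (p c : R) (D : set R) (F : R -> \bar R) :
  (c != 0)%R -> measurable D -> measurable_fun D F -> (forall u, D u -> 0 <= F u) ->
  \int[mu]_(u in D) F u = `|c|%:E * \int[mu]_(t in aff p c @^-1` D) F (aff p c t).
Proof.
move=> c0 mD mF F0.
have E1 := @ge0_integral_mscale _ _ R (pushforward mu (aff p c)) D mD (`|c|%:nng : {nonneg R})%R F mF F0.
have E2 := @ge0_integral_pushforward _ _ _ _ R (aff p c) (@measurable_aff _ p c setT) mu D F mD mF.
Unshelve. all: try exact: (@measurable_aff _ p c setT).
rewrite -E2; last by move=> u /set_mem; exact: F0.
rewrite -E1; apply: eq_measure_integral => A mA _ /=.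
exact: affine_push.
Qed.

Lemma intZ (R : realType) (D : set R) (k : R) (F : R -> R) :
  measurable D -> measurable_fun D F -> (0 <= k)%R -> (forall t, D t -> 0 <= F t)%R ->
  \int[mu]_(t in D) (k * F t)%:E = k%:E * \int[mu]_(t in D) (F t)%:E.
Proof.
move=> mD mF k0 F0; under eq_integral do rewrite EFinM.
apply: ge0_integralZl => //.
all: first [by apply/measurable_EFinP | by move=> t Dt; rewrite lee_fin; exact: F0].
Qed.

Lemma intD (R : realType) (D : set R) (F G : R -> R) :
  measurable D -> measurable_fun D F -> measurable_fun D G ->
  (forall t, D t -> 0 <= F t)%R -> (forall t, D t -> 0 <= G t)%R ->
  \int[mu]_(t in D) (F t + G t)%:E =
  \int[mu]_(t in D) (F t)%:E + \int[mu]_(t in D) (G t)%:E.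
Proof.
move=> mD mF mG F0 G0; under eq_integral do rewrite EFinD.
apply: ge0_integralD => //.
all: first [by apply/measurable_EFinP | by move=> t Dt; rewrite lee_fin; exact: F0
  | by move=> t Dt; rewrite lee_fin; exact: G0].
Qed.

Unset Implicit Arguments.
Theorem theorem2p1 (R : realType) (b m : R) (J : set R) (h phi f : R -> R) :
  (0 < b)%R -> (0 < m <= 1)%R ->
  `]0%R, 1%R[ `<=` J ->
  (forall t, J t -> (0 <= h t)%R) ->
  (exists t, J t /\ h t <> 0%R) ->
  (@lebesgue_measure R).-integrable `]0%R, 1%R[ (fun t => ((h t) ^+ 2)%:E) ->
  (forall x, (0 <= x <= b)%R -> (0 <= phi x <= b)%R) ->
  measurable_fun `[0%R, b] f ->
  phi_hm_convex b m h phi f ->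
  forall x y, (0 <= x <= b)%R -> (0 <= y <= b)%R -> phi x <> (m * phi y)%R ->
    ((`|m * phi y - phi x|)^-1)%:E *
      \int[@lebesgue_measure R]_(u in `[Num.min (phi x) (m * phi y)%R,
                                         Num.max (phi x) (m * phi y)%R])
         (f u * f (phi x + m * phi y - u))%:E
    <= ((f (phi x)) ^+ 2 + m ^+ 2 * (f (phi y)) ^+ 2)%:E *
         \int[@lebesgue_measure R]_(t in `]0%R, 1%R[) (h t * h (1 - t)%R)%:E
       + ((m + 1) * f (phi x) * f (phi y))%:E *
         \int[@lebesgue_measure R]_(t in `]0%R, 1%R[) ((h t) ^+ 2)%:E.
Proof.
move=> b0 /andP[m0 m1] J01 hJ _ ih2 phib mf [f0 fconv] x y xb yb pne.
set A := f (phi x); set B := f (phi y).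
have [px0 pxb] := andP (phib x xb).
have [py0' pyb'] := andP (phib y yb).
have py0 : (0 <= m * phi y)%R by rewrite mulr_ge0 // ltW.
have pyb : (m * phi y <= b)%R.
  by apply: (le_trans _ pyb'); rewrite ler_piMl.
have A0 : (0 <= A)%R by apply: f0; rewrite px0 pxb.
have B0 : (0 <= B)%R by apply: f0; rewrite py0' pyb'.
set lo := Num.min (phi x) (m * phi y)%R.
set hi := Num.max (phi x) (m * phi y)%R.
have [lo0 hib slh] : [/\ (0 <= lo)%R, (hi <= b)%R & (lo + hi = phi x + m * phi y)%R].
  rewrite /lo /hi; case: (leP (phi x) (m * phi y)%R) => H; split => //; try lra.

have c0 : (phi x - m * phi y != 0)%R by rewrite subr_eq0; apply/eqP.
have pre : aff (m * phi y) (phi x - m * phi y) @^-1` `[lo, hi] = `[0%R, 1%R].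
  apply/seteqP; split => t /=; rewrite !in_itv /= /aff /lo /hi.
    case: (leP (phi x) (m * phi y)%R) => H /andP[h1 h2]; apply/andP; split.
    - have H' : (phi x < m * phi y)%R by rewrite lt_neqAle H andbT; apply/eqP.
      nra.
    - have H' : (phi x < m * phi y)%R by rewrite lt_neqAle H andbT; apply/eqP.
      nra.
    - nra.
    - nra.
  case: (leP (phi x) (m * phi y)%R) => H /andP[h1 h2]; apply/andP; split; nra.
have sub0b : `[lo, hi] `<=` `[0%R, b].
  by move=> u /=; rewrite !in_itv /= => /andP[h1 h2]; apply/andP; split; lra.
have refl : forall u, `[lo, hi] u -> `[lo, hi] (phi x + m * phi y - u)%R.
  by move=> u /=; rewrite !in_itv /= -slh => /andP[h1 h2]; apply/andP; split; lra.
have mF : measurable_fun `[lo, hi] (fun u => (f u * f (phi x + m * phi y - u))%:E).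
  apply/measurable_EFinP; apply: measurable_funM.
    exact: measurable_funS mf.
  apply: (measurable_comp (F:=`[0%R, b])) => //.
    by move=> _ [u hu <-]; exact: sub0b (refl u hu).
  by apply: measurable_funB.
have F0 : forall u, `[lo, hi] u -> 0 <= (f u * f (phi x + m * phi y - u))%:E.
  move=> u hu; rewrite lee_fin mulr_ge0 //; apply: f0.
    by have := sub0b u hu; rewrite /= in_itv.
  by have := sub0b _ (refl u hu); rewrite /= in_itv.
rewrite (affine_integral (m * phi y) c0 _ mF F0) // pre.
rewrite distrC muleA -EFinM mulVf ?normr_eq0 // mul1e.
set g := aff (m * phi y) (phi x - m * phi y).
have mFg : measurable_fun (`]0%R, 1%R[ : set R)
    (fun t => (f (g t) * f (phi x + m * phi y - g t))%:E).
  apply: (measurable_comp (F:=`[lo, hi]) (f := fun u => (f u * f (phi x + m * phi y - u))%:E)) => //.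
    move=> _ [t ht <-]; have : (aff (m * phi y) (phi x - m * phi y) @^-1` `[lo, hi]) t.
      by rewrite pre; move: ht; rewrite /= !in_itv /= => /andP[? ?]; rewrite !ltW.
    by [].
  exact: measurable_aff.
rewrite integral_itv_bndoo //.
have mh2 : measurable_fun (`]0%R, 1%R[ : set R) (fun t => (h t ^+ 2)%R).
  by apply/measurable_EFinP; exact: (measurable_int _ ih2).
have mh : measurable_fun (`]0%R, 1%R[ : set R) h.
  apply: (@eq_measurable_fun _ _ _ _ _ (Num.sqrt \o (fun t => (h t ^+ 2)%R))).
    move=> t /set_mem ht /=; rewrite sqrtr_sqr ger0_norm //; exact/hJ/J01.
  apply: measurableT_comp => //.
  apply: continuous_measurable_fun => z; exact: sqrt_continuous.
have sub1 : forall t, (`]0%R, 1%R[ : set R) t -> (`]0%R, 1%R[ : set R) (1 - t)%R.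
  by move=> t; rewrite /= !in_itv /= => /andP[? ?]; apply/andP; split; lra.
have mh1 : measurable_fun (`]0%R, 1%R[ : set R) (fun t => h (1 - t)%R).
  apply: (measurable_comp (F:=(`]0%R, 1%R[ : set R))) => //.
    by move=> _ [t ht <-]; exact: sub1.
  by apply: measurable_funB.
pose G t := ((A ^+ 2 + m ^+ 2 * B ^+ 2) * (h t * h (1 - t)) +
   (m * A * B) * (h t ^+ 2 + h (1 - t) ^+ 2))%R.
have fg0 : forall t, (`]0%R, 1%R[ : set R) t ->
    (0 <= f (g t))%R /\ (0 <= f (phi x + m * phi y - g t))%R.
  move=> t ht.
  have hg : `[lo, hi] (g t).
    have : (aff (m * phi y) (phi x - m * phi y) @^-1` `[lo, hi]) t.
      by rewrite pre; move: ht; rewrite /= !in_itv /= => /andP[? ?]; rewrite !ltW.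
    by [].
  split; apply: f0.
    by have := sub0b _ hg; rewrite /= in_itv.
  by have := sub0b _ (refl _ hg); rewrite /= in_itv.
have Gle : forall t, (`]0%R, 1%R[ : set R) t ->
    (f (g t) * f (phi x + m * phi y - g t) <= G t)%R.
  move=> t ht; have [fu0 fv0] := fg0 t ht.
  have /andP[t0 t1] : ((0 < t) && (t < 1))%R by move: ht; rewrite /= in_itv.
  have e1 : g t = (t * phi x + m * (1 - t) * phi y)%R by rewrite /g /aff; ring.
  have e3 : (1 - (1 - t) = t)%R by ring.
  have e2 : (phi x + m * phi y - g t = (1 - t) * phi x + m * (1 - (1 - t)) * phi y)%R.
    by rewrite e1; ring.
  have c1 : (f (g t) <= h t * A + m * h (1 - t) * B)%R.
    by rewrite e1; apply: fconv => //; rewrite t0 t1.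
  have c2 : (f (phi x + m * phi y - g t) <= h (1 - t) * A + m * h t * B)%R.
    rewrite e2 -[in X in (_ <= _ + _ * h X * _)%R]e3; apply: fconv => //.
    by apply/andP; split; lra.
  apply: (le_trans (ler_pM fu0 fv0 c1 c2)).
  by rewrite /G le_eqVlt; apply/orP; left; apply/eqP; ring.
have mh12 : measurable_fun (`]0%R, 1%R[ : set R) (fun t => (h (1 - t) ^+ 2)%R).
  by apply: measurable_funM.
have mhh : measurable_fun (`]0%R, 1%R[ : set R) (fun t => (h t * h (1 - t))%R).
  by apply: measurable_funM.
have h0 : forall t, (`]0%R, 1%R[ : set R) t -> (0 <= h t)%R /\ (0 <= h (1 - t))%R.
  by move=> t ht; split; apply/hJ/J01 => //; exact: sub1.
have mG : measurable_fun (`]0%R, 1%R[ : set R) (fun t => (G t)%:E).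
  apply/measurable_EFinP; apply: measurable_funD; apply: measurable_funM => //.
  exact: measurable_funD.
apply: (@le_trans _ _ (\int[mu]_(t in (`]0%R, 1%R[ : set R)) (G t)%:E)).
  apply: (@ge0_le_integral _ _ R mu _ _ (fun t => (f (g t) * f (phi x + m * phi y - g t))%:E) (fun t => (G t)%:E)) => //.
    by move=> t ht; have [? ?] := fg0 t ht; rewrite lee_fin mulr_ge0.
have K10 : (0 <= A ^+ 2 + m ^+ 2 * B ^+ 2)%R.
- by rewrite addr_ge0 // ?mulr_ge0 // ?sqr_ge0 // ltW.
have K20 : (0 <= m * A * B)%R by rewrite !mulr_ge0 // ltW.
rewrite /G intD //; last 4 first.
- by apply: measurable_funM.
- apply: measurable_funM => //; exact: measurable_funD.
- by move=> t ht; have [? ?] := h0 t ht; rewrite !mulr_ge0.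
- by move=> t ht; rewrite mulr_ge0 // addr_ge0 // sqr_ge0.
rewrite intZ //; last by move=> t ht; have [? ?] := h0 t ht; rewrite mulr_ge0.
rewrite intZ //; last 2 first.
- exact: measurable_funD.
- by move=> t ht; rewrite addr_ge0 // sqr_ge0.
rewrite intD //; last 2 first.
- by move=> t ht; rewrite sqr_ge0.
- by move=> t ht; rewrite sqr_ge0.
have refl2 : \int[mu]_(t in (`]0%R, 1%R[ : set R)) (h (1 - t) ^+ 2)%:E =
             \int[mu]_(t in (`]0%R, 1%R[ : set R)) (h t ^+ 2)%:E.
  have c1 : ((-1 : R) != 0)%R by rewrite oppr_eq0 oner_neq0.
  rewrite [RHS](affine_integral 1%R c1) //; last 2 first.
  - by apply/measurable_EFinP.
  - by move=> t _; rewrite lee_fin sqr_ge0.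
  rewrite normrN normr1 mul1e.
  have -> : aff 1 (-1) @^-1` (`]0%R, 1%R[ : set R) = `]0%R, 1%R[.
    apply/seteqP; split => t /=; rewrite !in_itv /= /aff => /andP[? ?]; apply/andP; split; lra.
  by apply: eq_integral => t _; rewrite /aff mulrN1.
rewrite refl2.
apply: leeD2l.
have := integrable_fin_num _ ih2.
have I0 : 0 <= \int[mu]_(t in (`]0%R, 1%R[ : set R)) (h t ^+ 2)%:E.
  by apply: integral_ge0 => t _; rewrite lee_fin sqr_ge0.
move=> /(_ (measurable_itv _)); move: I0.
case: (\int[mu]_(t in (`]0%R, 1%R[ : set R)) (h t ^+ 2)%:E) => // r r0 _.
rewrite -EFinD -!EFinM lee_fin -subr_ge0.
have -> : ((m + 1) * A * B * r - m * A * B * (r + r) = (1 - m) * (A * B * r))%R by ring.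
by rewrite mulr_ge0 ?subr_ge0 // !mulr_ge0.
Qed.
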